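(* For the $n$-dimensional rigid body with a flat face rubber-rolling on a sphere (as in the context), with $n\ge3$, the gyroscopic coefficients in the coordinates $(s_1,\dots,s_{n-1})$ on $S=\mathbb R^{n-1}$ are: (C1) if $\mathbb J=\mathrm{diag}(J_1,J_2,\dots,J_n)$ and $a=0$, then $C_{ij}^k=0$ for all $i,j,k\in\{1,\dots,n-1\}$; (C2) if $\mathbb J=\mathrm{diag}(J_1,\dots,J_1,J_n)$, then $$C_{ij}^k=\frac{-ma}{R(J_1+J_n+ma^2)}\big(s_i\delta_j^k-s_j\delta_i^k\big),\qquad 1\le i,j,k\le n-1.$$
   Context: Fix $n\ge3$, $R>0$, $a\in\mathbb R$, $m>0$ and a symmetric positive definite $n\times n$ matrix $\mathbb J$ (mass tensor). Let $E_1,\dots,E_n$ be the standard basis of $\mathbb R^n$ and, for $u,v\in\mathbb R^n$, $u\wedge v=uv^T-vu^T\in\mathfrak{so}(n)$. The configuration space is $Q=\mathbb R^{n-1}\times SO(n)$ with points $((X_1,\dots,X_{n-1}),g)$; set $X=(X_1,\dots,X_{n-1},R+a)^T\in\mathbb R^n$ (so $\dot X_n=0$) and $\Omega=g^{-1}\dot g\in\mathfrak{so}(n)$. The Lagrangian is $L=\frac12(\mathbb I\Omega,\Omega)_\kappa+\frac m2\|\dot X+\Omega X\|^2$, where $\mathbb I(\Omega)=\mathbb J\Omega+\Omega\mathbb J$, $(\xi,\eta)_\kappa=-\frac12\mathrm{tr}(\xi\eta)$ and $\|\cdot\|$ is the Euclidean norm; this defines the kinetic energy metric $\langle\cdot,\cdot\rangle$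 on $Q$ (no potential). The constraints are the rolling constraint $\dot X=-R\,\Omega E_n$ and the no-spin constraint $\Omega_{\mu\nu}=0$ for $1\le\mu,\nu\le n-1$; together they are equivalent to $\Omega=-\frac1R\dot X\wedge E_n$ with $\dot X\in\mathbb R^{n-1}\times\{0\}$, and define the distribution $\mathcal D\subset TQ$. $SO(n)$ acts on $Q$ by $h\cdot(X,g)=(X,hg)$, making this an $SO(n)$-Chaplygin system (free proper isometric action, $\mathcal D$ invariant, $T_qQ=\mathcal D_q\oplus\mathfrak{so}(n)\cdot q$) with shape space $S=\mathbb R^{n-1}$ and global coordinates $s_i=X_i$, $i=1,\dots,n-1$. The horizontal lift $\mathrm{hor}_q(\partial_{s_i})$ is the vector in $\mathcal D_q$ projecting to $\partial_{s_i}$; with $K_{kl}=\langle\mathrm{hor}_q\partial_{s_k},\mathrm{hor}_q\partial_{s_l}\rangle$ and inverse $K^{kl}$, the gyroscopic coefficients are $C_{ij}^k=\sum_lK^{kl}\langle[\mathrm{hor}_q\partial_{s_i},\mathrm{hor}_q\partial_{s_j}],\mathrm{hor}_q\partial_{s_l}\rangle_q$ (Lie bracket of vector fields on $Q$). *)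

(* Defs.v *)
From Stdlib Require Import Reals Arith.
Open Scope R_scope.

(* Vectors and matrices are represented as functions on indices (0-based);
   only indices below the relevant dimension are ever read. *)
Definition vec := nat -> R.
Definition mat := nat -> nat -> R.

Fixpoint rsum (N : nat) (f : nat -> R) : R :=
  match N with O => 0 | S k => rsum k f + f k end.

Definition kron (i j : nat) : R := if Nat.eqb i j then 1 else 0.
(* standard basis: E k is E_{k+1} of the paper *)
Definition E (k : nat) : vec := fun i => kron i k.

Definition mmul (N : nat) (A B : mat) : mat :=
  fun i j => rsum N (fun l => A i l * B l j).
Definition mvec (N : nat) (A : mat) (v : vec) : vec :=
  fun i => rsum N (fun l => A i l * v l).
Definition tr (A : mat) : mat := fun i j => A j i.
Definition trace (N : nat) (A : mat) : R := rsum N (fun i => A i i).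
Definition dot (N : nat) (u v : vec) : R := rsum N (fun i => u i * v i).
Definition wedge (u v : vec) : mat := fun i j => u i * v j - v i * u j.

Definition skip (i r : nat) : nat := if Nat.ltb r i then r else S r.
Definition minor (A : mat) (i j : nat) : mat := fun r c => A (skip i r) (skip j c).
Fixpoint det (N : nat) (A : mat) : R :=
  match N with
  | O => 1
  | S M => rsum (S M) (fun j => (-1) ^ j * A 0%nat j * det M (minor A 0 j))
  end.
Definition minv (N : nat) (A : mat) : mat :=
  fun i j => (-1) ^ (i + j) * det (pred N) (minor A j i) / det N A.

Definition inSO (N : nat) (g : mat) : Prop :=
  (forall i j, (i < N)%nat -> (j < N)%nat -> mmul N (tr g) g i j = kron i j)
  /\ det N g = 1.

Definition II (N : nat) (J Om : mat) : mat :=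
  fun i j => mmul N J Om i j + mmul N Om J i j.
Definition kappa (N : nat) (xi eta : mat) : R := - (1/2) * trace N (mmul N xi eta).

Definition Xpos (N : nat) (Rr a : R) (s : vec) : vec :=
  fun i => if Nat.ltb i (N - 1) then s i
           else if Nat.eqb i (N - 1) then Rr + a else 0.
Definition Xdot (N : nat) (vs : vec) : vec :=
  fun i => if Nat.ltb i (N - 1) then vs i else 0.

(* Tangent vectors at q = (s, g) in the ambient coordinates (sdot, gdot),
   with body angular velocity Omega = g^{-1} gdot = g^T gdot. *)
Definition tvec := (vec * mat)%type.

(* kinetic energy metric <v,w>_q, L = 1/2 <qdot,qdot> *)
Definition metric (N : nat) (m Rr a : R) (J : mat) (s : vec) (g : mat)
  (v w : tvec) : R :=
  let Ov := mmul N (tr g) (snd v) in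
  let Ow := mmul N (tr g) (snd w) in
  kappa N (II N J Ov) Ow
  + m * dot N (fun i => Xdot N (fst v) i + mvec N Ov (Xpos N Rr a s) i)
              (fun i => Xdot N (fst w) i + mvec N Ow (Xpos N Rr a s) i).

(* vector fields on (an ambient neighbourhood of) Q *)
Definition field := vec -> mat -> tvec.

(* Horizontal lift of d/ds_i: Xdot = E_i, Omega = -(1/R) E_i /\ E_n,
   i.e. gdot = g Omega (extended to the ambient space by the same formula). *)
Definition Amat (N : nat) (Rr : R) (i : nat) : mat :=
  fun r c => - (1 / Rr) * wedge (E i) (E (N - 1)) r c.
Definition hor (N : nat) (Rr : R) (i : nat) : field :=
  fun s g => (E i, mmul N g (Amat N Rr i)).

Definition is_dirderiv (N : nat) (F : field) (s : vec) (g : mat) (v D : tvec) : Prop :=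
  (forall r, (r < N - 1)%nat ->
     derivable_pt_lim
       (fun t => fst (F (fun x => s x + t * fst v x)
                        (fun x y => g x y + t * snd v x y)) r) 0 (fst D r))
  /\ (forall r c, (r < N)%nat -> (c < N)%nat ->
     derivable_pt_lim
       (fun t => snd (F (fun x => s x + t * fst v x)
                        (fun x y => g x y + t * snd v x y)) r c) 0 (snd D r c)).

Definition is_bracket (N : nat) (Y Z : field) (s : vec) (g : mat) (B : tvec) : Prop :=
  exists D1 D2,
    is_dirderiv N Z s g (Y s g) D1 /\ is_dirderiv N Y s g (Z s g) D2 /\
    (forall r, (r < N - 1)%nat -> fst B r = fst D1 r - fst D2 r) /\
    (forall r c, (r < N)%nat -> (c < N)%nat -> snd B r c = snd D1 r c - snd D2 r c).

Definition Kmat (N : nat) (m Rr a : R) (J : mat) (s : vec) (g : mat) : mat :=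
  fun k l => metric N m Rr a J s g (hor N Rr k s g) (hor N Rr l s g).

Definition gyro (N : nat) (m Rr a : R) (J : mat) (s : vec) (g : mat)
  (B : tvec) (k : nat) : R :=
  rsum (N - 1) (fun l => minv (N - 1) (Kmat N m Rr a J s g) k l
                         * metric N m Rr a J s g B (hor N Rr l s g)).

Definition mat_sym (N : nat) (J : mat) : Prop :=
  forall i j, (i < N)%nat -> (j < N)%nat -> J i j = J j i.
Definition mat_posdef (N : nat) (J : mat) : Prop :=
  forall v : vec, (exists i, (i < N)%nat /\ v i <> 0) ->
    0 < rsum N (fun i => rsum N (fun j => v i * J i j * v j)).
Definition mat_diag (N : nat) (J : mat) : Prop :=
  forall i j, (i < N)%nat -> (j < N)%nat -> i <> j -> J i j = 0.

(* Main.v *)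
Require Import Defs.
From Stdlib Require Import Reals Arith.
From Stdlib Require Import Lia Lra.
From HB Require structures.
From mathcomp Require all_boot all_algebra Rstruct.
Open Scope R_scope.

Module MC.
Import HB.structures.
Import all_boot all_algebra Rstruct.
Import GRing.Theory.
Local Open Scope ring_scope.

Lemma rsum_big N (f : nat -> R) : rsum N f = \sum_(i < N) f i.
Proof.
elim: N => [|N IH]; first by rewrite big_ord0.
by rewrite big_ord_recr /= IH.
Qed.

Lemma powE (x : R) (k : nat) : pow x k = x ^+ k.
Proof. by elim: k => [|k IH] //=; rewrite exprS IH. Qed.

Lemma det_eq N (A : mat) : det N A = \det (\matrix_(i < N, j < N) A i j).
Proof.
elim: N A => [|N IH] A; first by rewrite det_mx00.
have -> : det N.+1 A = rsum N.+1 (fun j => Rmult (Rmult (pow (-1) j) (A 0%N j)) (det N (minor A 0 j))) by [].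
rewrite rsum_big.
rewrite (expand_det_row _ ord0); apply: eq_bigr => j _.
rewrite IH /cofactor mxE add0n powE.
rewrite !RmultE [_ * A _ _]mulrC -mulrA; congr (_ * (_ * \det _)).
apply/matrixP => r c; rewrite !mxE /minor /skip /=.
congr (A _ _); rewrite /bump; case: ltnP => h /=.
  by move/ltP/Nat.ltb_lt: h => ->.
by move/leP/Nat.ltb_ge: h => ->.
Qed.

Lemma minor_eq N (A : mat) (i j : nat) (hi : (i < N.+1)%N) (hj : (j < N.+1)%N) :
  \matrix_(r < N, c < N) minor A i j r c = row' (Ordinal hi) (col' (Ordinal hj) (\matrix_(r < N.+1, c < N.+1) A r c)).
Proof.
apply/matrixP => r c; rewrite !mxE /minor /skip /=.
congr (A _ _); rewrite /bump; case: ltnP => h /=.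
- by move/ltP/Nat.ltb_lt: h => ->.
- by move/leP/Nat.ltb_ge: h => ->.
- by move/ltP/Nat.ltb_lt: h => ->.
- by move/leP/Nat.ltb_ge: h => ->.
Qed.

Lemma minv_apply N (A : mat) (u : vec) k : lt k N -> det N A <> 0%R ->
  rsum N (fun l => Rmult (minv N A k l) (rsum N (fun p => Rmult (A l p) (u p)))) = u k.
Proof.
case: N => [|N] hk hd; first by exfalso; apply (Nat.nlt_0_r k).
have hk' : (k < N.+1)%N by apply/ltP.
set M := \matrix_(r < N.+1, c < N.+1) A r c.
set uv := \col_(p < N.+1) u p.
have e1 : forall l : 'I_N.+1, rsum N.+1 (fun p => Rmult (A l p) (u p)) = (M *m uv) l ord0.
  by move=> l; rewrite rsum_big mxE; apply: eq_bigr => p _; rewrite !mxE.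
have e2 : forall l : 'I_N.+1, minv N.+1 A k l = ((\det M)^-1 *: \adj M) (Ordinal hk') l.
  move=> l; rewrite !mxE /minv; change (Init.Nat.pred N.+1) with N; rewrite det_eq -/M det_eq (@minor_eq N A _ _ (ltn_ord l) hk').
  rewrite /cofactor powE addnC.
  by rewrite RmultE RdivE mulrC.
rewrite rsum_big.
transitivity ((((\det M)^-1 *: \adj M) *m (M *m uv)) (Ordinal hk') ord0).
  by rewrite mxE; apply: eq_bigr => l _; rewrite e1 e2.
rewrite mulmxA -scalemxAl mul_adj_mx scale_scalar_mx mul_scalar_mx mulVf.
  by rewrite scale1r mxE.
by rewrite -det_eq; apply/eqP.
Qed.

Lemma kronE (x y : nat) : kron x y = (x == y)%:R.
Proof.
rewrite /kron; case: (Nat.eqb_spec x y) => [->|ne]; first by rewrite eqxx.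
by have /eqP/negbTE -> : x <> y by [].
Qed.

Lemma det_nz N (A B : mat) :
  (forall a b, lt a N -> lt b N -> rsum N (fun p => Rmult (A a p) (B p b)) = kron a b) ->
  det N A <> 0%R.
Proof.
move=> h; rewrite det_eq => h0.
set M := \matrix_(r < N, c < N) A r c.
set MB := \matrix_(r < N, c < N) B r c.
have e : M *m MB = 1%:M.
  apply/matrixP => a b; rewrite !mxE.
  rewrite -val_eqE /= -kronE -(h a b (ltP (ltn_ord a)) (ltP (ltn_ord b))) rsum_big.
  by apply: eq_bigr => p _; rewrite !mxE.
have := det_mulmx M MB; rewrite e det1 h0 mul0r => /eqP.
by rewrite oner_eq0.
Qed.
End MC.

Lemma kron_refl x : kron x x = 1.
Proof. unfold kron; rewrite Nat.eqb_refl; reflexivity. Qed.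
Lemma kron_neq x y : x <> y -> kron x y = 0.
Proof. intro h; unfold kron; apply Nat.eqb_neq in h; rewrite h; reflexivity. Qed.
Lemma kron_sym x y : kron x y = kron y x.
Proof. unfold kron; rewrite Nat.eqb_sym; reflexivity. Qed.

Lemma rsum_ext N f g : (forall x, (x < N)%nat -> f x = g x) -> rsum N f = rsum N g.
Proof.
induction N; intros h; simpl; auto.
rewrite IHN, h; auto; intros; apply h; lia.
Qed.
Lemma rsum_plus N f g : rsum N (fun x => f x + g x) = rsum N f + rsum N g.
Proof. induction N; simpl; [ring|rewrite IHN; ring]. Qed.
Lemma rsum_minus N f g : rsum N (fun x => f x - g x) = rsum N f - rsum N g.
Proof. induction N; simpl; [ring|rewrite IHN; ring]. Qed.
Lemma rsum_scal N c f : rsum N (fun x => c * f x) = c * rsum N f.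
Proof. induction N; simpl; [ring|rewrite IHN; ring]. Qed.
Lemma rsum_zero N f : (forall x, (x < N)%nat -> f x = 0) -> rsum N f = 0.
Proof. intro h; rewrite (rsum_ext N f (fun _ => 0 * 0)); [rewrite rsum_scal; ring|intros; rewrite h; auto; ring]. Qed.
Lemma rsum_kron_l N x F : (x < N)%nat -> rsum N (fun p => kron p x * F p) = F x.
Proof.
induction N; intros h; [lia|simpl].
destruct (Nat.eq_dec x N) as [->|ne].
- rewrite rsum_zero; [rewrite kron_refl; ring|].
  intros y hy; rewrite kron_neq; [ring|lia].
- rewrite IHN by lia; rewrite kron_neq by lia; ring.
Qed.
Lemma rsum_kron_r N x F : (x < N)%nat -> rsum N (fun p => kron x p * F p) = F x.
Proof.
intro h; rewrite <- (rsum_kron_l N x F h); apply rsum_ext; intros; rewrite kron_sym; auto.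
Qed.
Lemma rsum_swap N M f : rsum N (fun a => rsum M (fun b => f a b)) = rsum M (fun b => rsum N (fun a => f a b)).
Proof.
induction N; simpl.
- symmetry; apply rsum_zero; auto.
- rewrite IHN, <- rsum_plus; auto.
Qed.
Lemma rsum_sq_nonneg N f : 0 <= rsum N (fun p => f p * f p).
Proof. induction N; simpl; [lra|]. pose proof (Rle_0_sqr (f N)); unfold Rsqr in H; lra. Qed.

Lemma mmul_assoc N A B C r c : mmul N A (mmul N B C) r c = mmul N (mmul N A B) C r c.
Proof.
unfold mmul.
rewrite (rsum_ext N _ (fun l => rsum N (fun p => A r l * (B l p * C p c)))) by (intros; rewrite rsum_scal; auto).
rewrite rsum_swap; apply rsum_ext; intros p _.
rewrite Rmult_comm, <- rsum_scal; apply rsum_ext; intros; ring.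
Qed.

Lemma so_cancel N g O r c : inSO N g -> (r < N)%nat -> (c < N)%nat ->
  mmul N (tr g) (mmul N g O) r c = O r c.
Proof.
intros [h _] hr hc; rewrite mmul_assoc.
transitivity (rsum N (fun p => mmul N (tr g) g r p * O p c)); [reflexivity|].
rewrite <- (rsum_kron_r N r (fun p => O p c) hr).
apply rsum_ext; intros; rewrite h; auto.
Qed.

Definition Uv N Rr a s (fv : vec) (O : mat) : vec :=
  fun p => Xdot N fv p + mvec N O (Xpos N Rr a s) p.

Lemma kappa_ext N J O1 O2 P1 P2 :
  (forall r c, (r < N)%nat -> (c < N)%nat -> O1 r c = P1 r c) ->
  (forall r c, (r < N)%nat -> (c < N)%nat -> O2 r c = P2 r c) ->
  kappa N (II N J O1) O2 = kappa N (II N J P1) P2.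
Proof.
intros h1 h2; unfold kappa, trace, mmul, II. f_equal.
apply rsum_ext; intros x hx. apply rsum_ext; intros y hy.
rewrite (h2 y x) by auto. f_equal. f_equal; apply rsum_ext; intros z hz; rewrite h1; auto.
Qed.

Lemma metric_red N m Rr a J s g fv fw O1 O2 : inSO N g ->
  metric N m Rr a J s g (fv, mmul N g O1) (fw, mmul N g O2)
  = kappa N (II N J O1) O2 + m * dot N (Uv N Rr a s fv O1) (Uv N Rr a s fw O2).
Proof.
intro hg; unfold metric; cbn [fst snd]. f_equal.
- apply kappa_ext; intros; apply so_cancel; auto.
- f_equal; unfold dot; apply rsum_ext; intros p hp; unfold Uv, mvec.
  f_equal; f_equal; apply rsum_ext; intros; rewrite so_cancel; auto.
Qed.

Lemma kappa_diag N J O1 O2 : mat_diag N J ->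
  kappa N (II N J O1) O2 = -(1/2) * rsum N (fun a => rsum N (fun b => (J a a + J b b) * O1 a b * O2 b a)).
Proof.
intro hd; unfold kappa, trace; f_equal; apply rsum_ext; intros a ha; apply rsum_ext; intros b hb.
unfold II, mmul.
assert (e1: rsum N (fun l => J a l * O1 l b) = J a a * O1 a b).
{ rewrite <- (rsum_kron_r N a (fun l => J a l * O1 l b)) by auto.
  apply rsum_ext; intros l hl. destruct (Nat.eq_dec a l).
  - subst; rewrite kron_refl; ring.
  - rewrite kron_neq, hd; auto; ring. }
assert (e2: rsum N (fun l => O1 a l * J l b) = O1 a b * J b b).
{ rewrite <- (rsum_kron_r N b (fun l => O1 a l * J l b)) by auto.
  apply rsum_ext; intros l hl. destruct (Nat.eq_dec b l).
  - subst; rewrite kron_refl; ring.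
  - rewrite kron_neq, (hd l b); auto; ring. }
rewrite e1, e2; ring.
Qed.

Lemma Amat_eq N Rr k r c : Amat N Rr k r c = -(1/Rr) * (kron r k * kron c (N-1) - kron r (N-1) * kron c k).
Proof. reflexivity. Qed.

Lemma Asum N Rr i r Y : (i < N)%nat -> (1 <= N)%nat ->
  rsum N (fun p => Amat N Rr i r p * Y p) = -(1/Rr) * kron r i * Y (N-1)%nat + (1/Rr) * kron r (N-1) * Y i.
Proof.
intros hi hN.
rewrite (rsum_ext N _ (fun p => kron p (N-1) * (-(1/Rr) * kron r i * Y p) + kron p i * ((1/Rr) * kron r (N-1) * Y p)))
  by (intros; rewrite Amat_eq; ring).
rewrite rsum_plus, !rsum_kron_l by lia; ring.
Qed.

Definition Wm (Rr : R) (i j : nat) : mat :=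
  fun r c => (1/(Rr*Rr)) * (kron r j * kron c i - kron r i * kron c j).

Lemma Wsum N Rr i j r Y : (i < N)%nat -> (j < N)%nat ->
  rsum N (fun q => Wm Rr i j r q * Y q) = (1/(Rr*Rr)) * (kron r j * Y i - kron r i * Y j).
Proof.
intros hi hj.
rewrite (rsum_ext N _ (fun q => kron q i * ((1/(Rr*Rr)) * kron r j * Y q) + kron q j * (-(1/(Rr*Rr)) * kron r i * Y q)))
  by (intros; unfold Wm; ring).
rewrite rsum_plus, !rsum_kron_l by lia; ring.
Qed.

Lemma Xpos_lt N Rr a s p : (p < N - 1)%nat -> Xpos N Rr a s p = s p.
Proof. intro h; unfold Xpos; apply Nat.ltb_lt in h; rewrite h; auto. Qed.
Lemma Xpos_nn N Rr a s : Xpos N Rr a s (N-1)%nat = Rr + a.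
Proof. unfold Xpos; rewrite Nat.ltb_irrefl, Nat.eqb_refl; auto. Qed.

Lemma Uv_hor N Rr a s k p : (k < N - 1)%nat -> Rr <> 0 ->
  Uv N Rr a s (E k) (Amat N Rr k) p = -(a/Rr) * kron p k + s k / Rr * kron p (N-1).
Proof.
intros hk hR; unfold Uv, mvec.
rewrite Asum by lia. rewrite Xpos_nn, Xpos_lt by lia.
assert (Xdot N (E k) p = kron p k) as ->.
{ unfold Xdot, E. destruct (p <? N - 1) eqn:e; auto.
  apply Nat.ltb_ge in e; rewrite kron_neq; auto; lia. }
field; auto.
Qed.

Lemma Uv_B N Rr a s i j p : (i < N - 1)%nat -> (j < N - 1)%nat ->
  Uv N Rr a s (fun _ => 0) (Wm Rr i j) p = (1/(Rr*Rr)) * (kron p j * s i - kron p i * s j).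
Proof.
intros hi hj; unfold Uv, mvec.
rewrite Wsum by lia. rewrite !Xpos_lt by lia.
assert (Xdot N (fun _ => 0) p = 0) as ->.
{ unfold Xdot. destruct (p <? N - 1); auto. }
ring.
Qed.

Lemma AA N Rr i j r c : (i < N - 1)%nat -> (j < N - 1)%nat -> Rr <> 0 ->
  mmul N (Amat N Rr i) (Amat N Rr j) r c
  = -(1/(Rr*Rr)) * (kron r i * kron c j + kron r (N-1) * kron i j * kron c (N-1)).
Proof.
intros hi hj hR; unfold mmul. rewrite Asum by lia.
rewrite !Amat_eq. rewrite (kron_neq (N-1) j), (kron_neq i (N-1)), kron_refl by lia.
field; auto.
Qed.

Lemma comm_W N Rr i j r c : (i < N - 1)%nat -> (j < N - 1)%nat -> Rr <> 0 ->
  mmul N (Amat N Rr i) (Amat N Rr j) r c - mmul N (Amat N Rr j) (Amat N Rr i) r c = Wm Rr i j r c.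
Proof.
intros hi hj hR; rewrite !AA by auto; rewrite (kron_sym j i); unfold Wm; ring.
Qed.

Lemma sum2 N x y F G : (x < N)%nat -> (y < N)%nat ->
  rsum N (fun p => kron p x * F p + kron p y * G p) = F x + G y.
Proof. intros; rewrite rsum_plus, !rsum_kron_l; auto. Qed.

Lemma metric_Bl N m Rr a J s g i j l : (3 <= N)%nat -> inSO N g -> mat_diag N J -> Rr <> 0 ->
  (i < N - 1)%nat -> (j < N - 1)%nat -> (l < N - 1)%nat ->
  metric N m Rr a J s g ((fun _ => 0), mmul N g (Wm Rr i j)) (hor N Rr l s g)
  = m * (a / (Rr*Rr*Rr)) * (s j * kron i l - s i * kron j l).
Proof.
intros hN hg hd hR hi hj hl; unfold hor; rewrite metric_red by auto.
rewrite kappa_diag by auto.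
rewrite (rsum_zero N (fun a0 => rsum N _)).
2:{ intros x hx; apply rsum_zero; intros y hy. unfold Wm; rewrite Amat_eq.
    destruct (Nat.eq_dec x (N-1)).
    - subst; rewrite (kron_neq (N-1) j), (kron_neq (N-1) i) by lia; ring.
    - rewrite (kron_neq x (N-1)) by auto. destruct (Nat.eq_dec y (N-1)).
      + subst; rewrite (kron_neq (N-1) j), (kron_neq (N-1) i) by lia; ring.
      + rewrite (kron_neq y (N-1)) by auto; ring. }
unfold dot.
rewrite (rsum_ext N _ (fun p => kron p j * ((1/(Rr*Rr)) * s i * (-(a/Rr) * kron p l + s l / Rr * kron p (N-1)))
   + kron p i * (-(1/(Rr*Rr)) * s j * (-(a/Rr) * kron p l + s l / Rr * kron p (N-1))))).
2:{ intros p hp; rewrite Uv_B, Uv_hor by auto; ring. }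
rewrite sum2 by lia.
rewrite (kron_neq j (N-1)), (kron_neq i (N-1)) by lia.
field; auto.
Qed.

Lemma metric_kl N m Rr a J s g k l : (3 <= N)%nat -> inSO N g -> mat_diag N J -> Rr <> 0 ->
  (k < N - 1)%nat -> (l < N - 1)%nat ->
  metric N m Rr a J s g (hor N Rr k s g) (hor N Rr l s g)
  = (J k k + J (N-1)%nat (N-1)%nat) / (Rr*Rr) * kron k l + m * (a*a/(Rr*Rr) * kron k l + s k * s l / (Rr*Rr)).
Proof.
intros hN hg hd hR hk hl; unfold hor; rewrite metric_red by auto.
rewrite kappa_diag by auto.
rewrite (rsum_ext N _ (fun x => kron x k * (-(1/(Rr*Rr)) * (J x x + J (N-1)%nat (N-1)%nat) * kron x l)
   + kron x (N-1) * (-(1/(Rr*Rr)) * (J x x + J k k) * kron x (N-1) * kron k l))).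
2:{ intros x hx.
    rewrite (rsum_ext N _ (fun b => Amat N Rr k x b * ((J x x + J b b) * Amat N Rr l b x))) by (intros; ring).
    rewrite Asum by lia. rewrite !Amat_eq.
    rewrite (kron_neq (N-1) l), kron_refl, (kron_neq k (N-1)) by lia. field; auto. }
rewrite sum2 by lia. rewrite kron_refl.
unfold dot.
rewrite (rsum_ext N _ (fun p => kron p k * (-(a/Rr) * (-(a/Rr) * kron p l + s l / Rr * kron p (N-1)))
   + kron p (N-1) * (s k / Rr * (-(a/Rr) * kron p l + s l / Rr * kron p (N-1))))).
2:{ intros p hp; rewrite !Uv_hor by auto; ring. }
rewrite sum2 by lia.
rewrite (kron_neq k (N-1)), (kron_neq (N-1) l), kron_refl by lia.
field; auto.
Qed.

Lemma deriv_rsum N a b c x :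
  derivable_pt_lim (fun t => rsum N (fun l => (a l + t * b l) * c l)) x (rsum N (fun l => b l * c l)).
Proof.
assert (e : forall t, rsum N (fun l => (a l + t * b l) * c l) = rsum N (fun l => a l * c l) + t * rsum N (fun l => b l * c l)).
{ intro t; rewrite <- rsum_scal, <- rsum_plus; apply rsum_ext; intros; ring. }
intros eps heps. exists (mkposreal 1 Rlt_0_1). intros h hh _.
rewrite !e.
replace ((rsum N (fun l => a l * c l) + (x + h) * rsum N (fun l => b l * c l) -
   (rsum N (fun l => a l * c l) + x * rsum N (fun l => b l * c l))) / h - rsum N (fun l => b l * c l)) with 0
  by (field; auto).
rewrite Rabs_R0; auto.
Qed.

Lemma dirderiv_hor N Rr s g i j :
  is_dirderiv N (hor N Rr j) s g (hor N Rr i s g)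
    ((fun _ => 0), mmul N (mmul N g (Amat N Rr i)) (Amat N Rr j)).
Proof.
split.
- intros r _; cbn [fst snd hor]. apply derivable_pt_lim_const.
- intros r c _ _. unfold hor; cbn [fst snd].
  exact (deriv_rsum N (fun l => g r l) (fun l => mmul N g (Amat N Rr i) r l) (fun l => Amat N Rr j l c) 0).
Qed.

Lemma bracket N Rr s g i j : Rr <> 0 -> (i < N - 1)%nat -> (j < N - 1)%nat ->
  is_bracket N (hor N Rr i) (hor N Rr j) s g ((fun _ => 0), mmul N g (Wm Rr i j)).
Proof.
intros hR hi hj.
exists ((fun _ => 0), mmul N (mmul N g (Amat N Rr i)) (Amat N Rr j)),
       ((fun _ => 0), mmul N (mmul N g (Amat N Rr j)) (Amat N Rr i)).
split; [apply dirderiv_hor|split; [apply dirderiv_hor|split]].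
- intros; cbn; ring.
- intros r c _ _; cbn [fst snd]. rewrite <- !mmul_assoc. unfold mmul at 1 2 4.
  rewrite <- rsum_minus. unfold mmul. apply rsum_ext; intros l _.
  rewrite <- Rmult_minus_distr_l. f_equal. symmetry. apply (comm_W N); auto.
Qed.

Lemma posdef_diag N J x : mat_posdef N J -> (x < N)%nat -> 0 < J x x.
Proof.
intros h hx.
assert (H : 0 < rsum N (fun i => rsum N (fun j => kron i x * J i j * kron j x))).
{ apply h. exists x; split; auto. rewrite kron_refl; lra. }
rewrite (rsum_ext N _ (fun i => kron i x * J i x)) in H.
- rewrite rsum_kron_l in H; auto.
- intros i hi. rewrite (rsum_ext N _ (fun j => kron j x * (kron i x * J i j))) by (intros; ring).
  apply rsum_kron_l; auto.
Qed.

Definition Kform (c m Rr : R) (s : vec) : mat :=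
  fun l p => c / (Rr*Rr) * kron l p + m * s l * s p / (Rr*Rr).
Definition Kinv (c d m Rr : R) (s : vec) : mat :=
  fun p b => Rr*Rr * (kron p b / c - m * s p * s b / (c*d)).

Lemma Kform_inv M c m Rr s a0 b0 : c <> 0 -> Rr <> 0 -> c + m * rsum M (fun p => s p * s p) <> 0 ->
  (a0 < M)%nat -> (b0 < M)%nat ->
  rsum M (fun p => Kform c m Rr s a0 p * Kinv c (c + m * rsum M (fun p => s p * s p)) m Rr s p b0) = kron a0 b0.
Proof.
intros hc hR hd ha hb.
set (d := c + m * rsum M (fun p => s p * s p)) in *.
rewrite (rsum_ext M _ (fun p => (kron a0 p * (kron p b0 - m * s p * s b0 / d) + kron b0 p * (m * s a0 * s p / c))
   + (- (m*m*s a0*s b0)/(c*d)) * (s p * s p))).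
2:{ intros p hp; unfold Kform, Kinv; rewrite (kron_sym p b0); field; auto. }
rewrite !rsum_plus, !rsum_kron_r, rsum_scal by auto.
unfold d. field. auto.
Qed.

Theorem mainTheorem5 (n : nat) (Rr a m : R) (J : mat) :
  (3 <= n)%nat -> 0 < Rr -> 0 < m -> mat_sym n J -> mat_posdef n J ->
  ((mat_diag n J -> a = 0 ->
    forall (s : vec) (g : mat), inSO n g ->
    forall i j k : nat, (i < n - 1)%nat -> (j < n - 1)%nat -> (k < n - 1)%nat ->
    exists B : tvec, is_bracket n (hor n Rr i) (hor n Rr j) s g B /\
      gyro n m Rr a J s g B k = 0)
  /\
   (mat_diag n J -> (forall i, (i < n - 1)%nat -> J i i = J 0%nat 0%nat) ->
    forall (s : vec) (g : mat), inSO n g ->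
    forall i j k : nat, (i < n - 1)%nat -> (j < n - 1)%nat -> (k < n - 1)%nat ->
    exists B : tvec, is_bracket n (hor n Rr i) (hor n Rr j) s g B /\
      gyro n m Rr a J s g B k =
        (- (m * a)) / (Rr * (J 0%nat 0%nat + J (n - 1)%nat (n - 1)%nat + m * a ^ 2))
        * (s i * kron j k - s j * kron i k))).
Proof.
intros hN hRp hm hsym hpd.
assert (hR : Rr <> 0) by lra.
split.
- intros hd ha s g hg i j k hi hj hk.
  exists ((fun _ => 0), mmul n g (Wm Rr i j)). split; [apply bracket; auto|].
  unfold gyro. apply rsum_zero; intros l hl.
  rewrite metric_Bl by auto. subst a. unfold Rdiv; ring.
- intros hd hJ s g hg i j k hi hj hk.
  exists ((fun _ => 0), mmul n g (Wm Rr i j)). split; [apply bracket; auto|].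
  unfold gyro.
  assert (h0 : 0 < J 0%nat 0%nat) by (apply (posdef_diag n); auto; lia).
  assert (h1 : 0 < J (n-1)%nat (n-1)%nat) by (apply (posdef_diag n); auto; lia).
  assert (ha2 : 0 <= m * a ^ 2) by (apply Rmult_le_pos; [lra| apply pow2_ge_0]).
  set (c := J 0%nat 0%nat + J (n - 1)%nat (n - 1)%nat + m * a ^ 2).
  assert (hc : 0 < c) by (unfold c; lra).
  set (K := Kmat n m Rr a J s g).
  assert (hK : forall l p, (l < n - 1)%nat -> (p < n - 1)%nat -> K l p = Kform c m Rr s l p).
  { intros l p hl hp. unfold K, Kmat. rewrite metric_kl by auto. rewrite (hJ l hl).
    unfold Kform, c. field. auto. }
  set (u := fun p => (- (m * a)) / (Rr * c) * (s i * kron j p - s j * kron i p)).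
  change ((- (m * a)) / (Rr * c) * (s i * kron j k - s j * kron i k)) with (u k).
  rewrite (rsum_ext (n-1) _ (fun l => minv (n-1) K k l * rsum (n-1) (fun p => K l p * u p))).
  + apply MC.minv_apply; auto.
    set (S := rsum (n-1) (fun p => s p * s p)).
    assert (hS : 0 <= S) by apply rsum_sq_nonneg.
    assert (hd0 : c + m * S <> 0) by (assert (0 <= m * S) by (apply Rmult_le_pos; lra); lra).
    apply (MC.det_nz (n-1) K (Kinv c (c + m * S) m Rr s)).
    intros a0 b0 ha0 hb0.
    rewrite <- (Kform_inv (n-1) c m Rr s a0 b0) by (auto; lra).
    apply rsum_ext; intros p hp. rewrite hK; auto.
  + intros l hl. f_equal. rewrite metric_Bl by auto.
    rewrite (rsum_ext (n-1) _ (fun p => kron j p * ((- (m * a)) / (Rr * c) * s i * Kform c m Rr s l p)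
       + kron i p * (- ((- (m * a)) / (Rr * c)) * s j * Kform c m Rr s l p))).
    2:{ intros p hp. rewrite hK by auto. unfold u. ring. }
    rewrite rsum_plus, !rsum_kron_r by auto.
    unfold Kform. rewrite (kron_sym l j), (kron_sym l i). field. split; lra.
Qed.
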